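(* For any group $A$, the assignment $q\mapsto\mathrm{Ker}(q)$ yields a bijection $$\bigsqcup_{B<A}\mathcal Z^1(\mathsf T^l_{\imath_B},(B,m_B))\;\cong\;\mathsf{FAC}(A),$$ sending $q$ in the $B$-summand to $(B,\mathrm{Ker}(q))$, where $B$ ranges over proper subgroups of $A$ and $\imath_B:B\hookrightarrow A$ is the inclusion.
   Context: For a subgroup $B$ of $A$ with inclusion $\imath_B$, $\mathcal Z^1(\mathsf T^l_{\imath_B},(B,m_B))$ is identified with the set of maps $q:A\to B$ satisfying (ZL1) $q(1_A)=1_A$; (ZL2) $q(ba)=b\,q(a)$ for all $a\in A,b\in B$; (ZL3) $q(aa')=q(a\,q(a'))$ for all $a,a'\in A$ (these are exactly the algebra structures on the left $B$-set $B$ for the monad $A\otimes_B-$ on left $B$-sets). $\mathrm{Ker}(q)=\{a:q(a)=1_A\}$. $\mathsf{FAC}(A)$ is the set of pairs $(B,X)$ with $B$ a proper subgroup of $A$, $X$ a subgroup of $A$, $B\cap X=\{1_A\}$ and $BX=A$. *)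

(* Defs.v *)
(* an arbitrary (possibly infinite) group given by its carrier
   type and operations; subsets/subgroups are predicates T -> Prop. *)

Record is_group {T : Type} (mul : T -> T -> T) (one : T) (inv : T -> T) : Prop := {
  grp_assoc : forall x y z, mul x (mul y z) = mul (mul x y) z;
  grp_mul1l : forall x, mul one x = x;
  grp_mulVl : forall x, mul (inv x) x = one
}.

Definition is_subgroup {T : Type} (mul : T -> T -> T) (one : T) (inv : T -> T)
  (B : T -> Prop) : Prop :=
  B one /\ (forall x y, B x -> B y -> B (mul x y)) /\ (forall x, B x -> B (inv x)).

Definition is_proper_subgroup {T : Type} (mul : T -> T -> T) (one : T) (inv : T -> T)
  (B : T -> Prop) : Prop :=
  is_subgroup mul one inv B /\ exists a, ~ B a.

Definition Z1 {T : Type} (mul : T -> T -> T) (one : T)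
  (B : T -> Prop) (q : T -> T) : Prop :=
  (forall a, B (q a)) /\
  q one = one /\
  (forall a b, B b -> q (mul b a) = mul b (q a)) /\
  (forall a a', q (mul a a') = q (mul a (q a'))).

Definition Ker {T : Type} (one : T) (q : T -> T) : T -> Prop := fun a => q a = one.

Definition in_FAC {T : Type} (mul : T -> T -> T) (one : T) (inv : T -> T)
  (B X : T -> Prop) : Prop :=
  is_proper_subgroup mul one inv B /\
  is_subgroup mul one inv X /\
  (forall a, B a -> X a -> a = one) /\
  (forall a, exists b x, B b /\ X x /\ a = mul b x).

(* Main.v *)
Require Import Defs.
From Stdlib Require Import ClassicalEpsilon.

Section G.
Context {T : Type} (mul : T -> T -> T) (one : T) (inv : T -> T)
  (HA : is_group mul one inv).

Lemma g_mulV x : mul x (inv x) = one.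
Proof.
  destruct HA as [As L1 LV].
  rewrite <- (L1 (mul x (inv x))).
  rewrite <- (LV (inv x)) at 1.
  rewrite <- As, (As (inv x) x (inv x)), LV, L1. apply LV.
Qed.

Lemma g_mul1r x : mul x one = x.
Proof.
  destruct HA as [As L1 LV].
  rewrite <- (LV x), As, g_mulV. apply L1.
Qed.

Lemma g_uniq (B X : T -> Prop) : is_subgroup mul one inv B -> is_subgroup mul one inv X ->
  (forall a, B a -> X a -> a = one) ->
  forall b x b' x', B b -> X x -> B b' -> X x' -> mul b x = mul b' x' -> b = b'.
Proof.
  intros [B1 [BM BI]] [X1 [XM XI]] Hd b x b' x' Hb Hx Hb' Hx' E.
  destruct HA as [As L1 LV].
  assert (E2 : mul (inv b') b = mul x' (inv x)).
  { assert (E1: mul (inv b') (mul (mul b x) (inv x)) = mul (inv b') (mul (mul b' x') (inv x)))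
      by (rewrite E; reflexivity).
    rewrite <- !As, g_mulV, g_mul1r in E1. rewrite E1, !As, LV, L1. reflexivity. }
  assert (E3 : mul (inv b') b = one).
  { apply Hd. apply BM; auto. rewrite E2. apply XM; auto. }
  rewrite <- (L1 b), <- (g_mulV b'), <- As, E3, g_mul1r. reflexivity.
Qed.
End G.

Theorem theorem4p8 (T : Type) (mul : T -> T -> T) (one : T) (inv : T -> T)
  (HA : is_group mul one inv) :
  (forall (B : T -> Prop) (q : T -> T),
     is_proper_subgroup mul one inv B -> Z1 mul one B q ->
     in_FAC mul one inv B (Ker one q)) /\
  (forall (B B' : T -> Prop) (q q' : T -> T),
     is_proper_subgroup mul one inv B -> Z1 mul one B q ->
     is_proper_subgroup mul one inv B' -> Z1 mul one B' q' ->
     (forall a, B a <-> B' a) ->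
     (forall a, Ker one q a <-> Ker one q' a) ->
     forall a, q a = q' a) /\
  (forall (B X : T -> Prop),
     in_FAC mul one inv B X ->
     exists q : T -> T, Z1 mul one B q /\ (forall a, Ker one q a <-> X a)).
Proof.
  pose proof (g_mulV mul one inv HA) as MV.
  pose proof (g_mul1r mul one inv HA) as M1.
  destruct HA as [As L1 LV].
  assert (Dec : forall a c, a = mul c (mul (inv c) a))
    by (intros; rewrite As, MV, L1; reflexivity).
  split; [|split].
  - intros B q HB [QB [Q1 [Q2 Q3]]]. pose proof HB as [[B1 [BM BI]] _].
    split; [exact HB|]. split; [|split].
    + unfold Ker. split; [exact Q1|]. split.
      * intros x y Hx Hy. rewrite Q3, Hy, M1. exact Hx.
      * intros x Hx. transitivity (q (mul (inv x) (q x))); [rewrite Hx, M1; reflexivity|]. rewrite <- Q3, LV. exact Q1.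
    + intros b Hb Hk. unfold Ker in Hk. rewrite <- (M1 b), Q2, Q1, M1 in Hk; auto.
    + intros a. exists (q a), (mul (inv (q a)) a). split; [auto|split; [|apply Dec]].
      unfold Ker. rewrite Q2 by auto. apply LV.
  - intros B B' q q' HB [QB [Q1 [Q2 Q3]]] HB' [QB' [Q1' [Q2' Q3']]] EB EK a.
    pose proof HB as [[B1 [BM BI]] _].
    assert (K : Ker one q (mul (inv (q a)) a)).
    { unfold Ker. rewrite Q2 by auto. apply LV. }
    apply EK in K. unfold Ker in K.
    rewrite (Dec a (q a)) at 2. rewrite Q2', K, M1; [reflexivity|]. apply EB; auto.
  - intros B X [[HB _] [HX [Hd Hf]]].
    pose proof HB as [B1 [BM BI]]. pose proof HX as [X1 [XM XI]].
    pose (q := fun a => proj1_sig (constructive_indefinite_description _ (Hf a))).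
    assert (Qs : forall a, B (q a) /\ exists x, X x /\ a = mul (q a) x).
    { intro a. unfold q. destruct (constructive_indefinite_description _ (Hf a)) as [b [x [H1 [H2 H3]]]].
      simpl. eauto. }
    assert (U : forall a b x, B b -> X x -> a = mul b x -> q a = b).
    { intros a b x Hb Hx E. destruct (Qs a) as [Hq [y [Hy Ey]]].
      apply (g_uniq mul one inv (@Build_is_group T mul one inv As L1 LV) B X HB HX Hd _ y _ x); auto. congruence. }
    exists q. split; [split; [|split; [|split]]|].
    + intro a; apply Qs.
    + apply (U one one one B1 X1). rewrite L1; reflexivity.
    + intros a b Hb. destruct (Qs a) as [Hq [y [Hy Ey]]].
      apply (U _ _ y); auto. rewrite Ey at 1. apply As.
    + intros a a'. destruct (Qs a') as [Hq' [y' [Hy' Ey']]].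
      destruct (Qs (mul a (q a'))) as [Hc [y [Hy Ey]]].
      apply (U _ _ (mul y y')); auto. rewrite As, <- Ey, <- As, <- Ey'. reflexivity.
    + intro a. unfold Ker. split.
      * intro E. destruct (Qs a) as [_ [y [Hy Ey]]]. rewrite E, L1 in Ey. subst; auto.
      * intro Ha. apply (U _ _ a); auto.
Qed.
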